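(* Let $\mathcal{L}:\mathbb{R}^d\to\mathbb{R}$ be differentiable with $\nabla\mathcal{L}$ Lipschitz continuous with constant $L$. Run full-batch MoFO with $\beta_1<\sqrt{\beta_2}<1$, $\epsilon=0$ and learning rates $\eta_t=\eta/\sqrt{t}$ ($\eta>0$). Then for all iterations $t\ge s\ge1$ and every coordinate $i$, $$|g_{i,t}-g_{i,s}|\le\|g_t-g_s\|_2\le\frac{2\sqrt2\,LC\eta\,(t-s)}{\sqrt t},$$ where $C=\dfrac{\sqrt{d\cdot(\alpha\%)+B}}{\sqrt{1-\beta_2}\,(1-\beta_1/\sqrt{\beta_2})}$.
   Context: The coordinates of $\mathbb{R}^d$ are partitioned into $B$ blocks of sizes $d_1,\dots,d_B$ with $\sum_kd_k=d$. Fix $\alpha\%\in(0,1]$. For $z\in\mathbb{R}^d$, $\texttt{FLT}_\alpha(z)\in\{0,1\}^d$ equals, in each block $k$, $1$ exactly on a set of $\lceil d_k\cdot\alpha\%\rceil$ indices with the largest absolute values of $z$ within that block (ties broken in favour of smaller indices), and $0$ elsewhere. Full-batch MoFO with $\beta_1,\beta_2\in(0,1)$, learning rates $\eta_t>0$, initial point $\theta_0$: $m_0=v_0=0$; for $t\ge1$, $g_t=\nabla\mathcal{L}(\theta_{t-1})$, $m_t=\beta_1m_{t-1}+(1-\beta_1)g_t$, $v_t=\beta_2v_{t-1}+(1-\beta_2)g_t\odot g_t$, $\hat m_t=m_t/(1-\beta_1^t)$, $\hat v_t=v_t/(1-\beta_2^t)$, $\theta_t=\theta_{t-1}-\eta_t(\hat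 m_t\odot\texttt{FLT}_\alpha(m_t))/\sqrt{\hat v_t}$ entrywise ($\epsilon=0$: no additive constant in the denominator; a quotient with $\hat v_{i,t}=0$ is taken as $0$). $g_{i,t}$ denotes the $i$-th coordinate of $g_t$. *)

(* Defs.v *)
From HB Require Import structures.
From mathcomp Require Import all_boot all_order all_algebra.
From mathcomp Require Import all_classical all_reals all_analysis.
Set Implicit Arguments. Unset Strict Implicit. Unset Printing Implicit Defensive.
Import Order.TTheory GRing.Theory Num.Theory.
Import numFieldNormedType.Exports.
Local Open Scope ring_scope.

Section MoFO.
Variables (R : realType) (d B : nat).
Implicit Types (x y z : 'rV[R]_d).

Definition norm2 x : R := Num.sqrt (\sum_(i < d) (x ord0 i) ^+ 2).

Definition dotp x y : R := \sum_(i < d) x ord0 i * y ord0 i.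

Definition is_gradient (f : 'rV[R]_d -> R) (grad : 'rV[R]_d -> 'rV[R]_d) :=
  forall x, differentiable f x /\ forall v, 'd f x v = dotp (grad x) v.

Definition blk_size (blk : 'I_d -> 'I_B) (k : 'I_B) : nat :=
  #|[set j : 'I_d | blk j == k]|.

(* Rank of coordinate i inside its block w.r.t. |z|, descending,
   ties broken in favour of smaller indices (0-based). *)
Definition blk_rank (blk : 'I_d -> 'I_B) z (i : 'I_d) : nat :=
  #|[set j : 'I_d | (blk j == blk i) &&
       ((`|z ord0 i| < `|z ord0 j|) || ((`|z ord0 j| == `|z ord0 i|) && (j < i)%N))]|.

(* FLT_alpha(z): in each block k, 1 exactly on the ceil(d_k * alpha)
   coordinates with the largest |z| (ties to smaller index), 0 elsewhere. *)
Definition FLT (blk : 'I_d -> 'I_B) (alpha : R) z : 'rV[R]_d :=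
  \row_(i < d) (if ((blk_rank blk z i)%:Z < Num.ceil ((blk_size blk (blk i))%:R * alpha))%R
                then 1 else 0).

(* Full-batch MoFO, eps = 0.  [mofo_state t = (theta_t, m_t, v_t)]. *)
Fixpoint mofo_state (grad : 'rV[R]_d -> 'rV[R]_d) (blk : 'I_d -> 'I_B)
    (alpha beta1 beta2 : R) (eta : nat -> R) (theta0 : 'rV[R]_d) (t : nat)
    : 'rV[R]_d * 'rV[R]_d * 'rV[R]_d :=
  match t with
  | 0 => (theta0, 0, 0)
  | t'.+1 =>
    let: (th, m, v) := mofo_state grad blk alpha beta1 beta2 eta theta0 t' in
    let g := grad th in
    let m1 := beta1 *: m + (1 - beta1) *: g in
    let v1 := beta2 *: v + (1 - beta2) *: \row_(i < d) (g ord0 i ^+ 2) in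
    let mhat := (1 - beta1 ^+ t'.+1)^-1 *: m1 in
    let vhat := (1 - beta2 ^+ t'.+1)^-1 *: v1 in
    let mask := FLT blk alpha m1 in
    let th1 := th - eta t'.+1 *:
        \row_(i < d) (if vhat ord0 i == 0 then 0
                      else mhat ord0 i * mask ord0 i / Num.sqrt (vhat ord0 i)) in
    (th1, m1, v1)
  end.

Definition mofo_theta grad blk alpha beta1 beta2 eta theta0 t : 'rV[R]_d :=
  (mofo_state grad blk alpha beta1 beta2 eta theta0 t).1.1.

(* g_t = grad L(theta_{t-1}), for t >= 1. *)
Definition mofo_grad grad blk alpha beta1 beta2 eta theta0 t : 'rV[R]_d :=
  grad (mofo_theta grad blk alpha beta1 beta2 eta theta0 t.-1).

End MoFO.

(* Main.v *)
Require Import Defs.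
From HB Require Import structures.
From mathcomp Require Import all_boot all_order all_algebra.
From mathcomp Require Import all_classical all_reals all_analysis.
From mathcomp Require Import ring lra.
Import Order.TTheory GRing.Theory Num.Theory.
Import numFieldNormedType.Exports.
Local Open Scope ring_scope.
Section N.
Variables (R : realType) (d : nat).
Implicit Types x y : 'rV[R]_d.

Lemma norm2_ge0 x : 0 <= norm2 x.
Proof. exact: sqrtr_ge0. Qed.

Lemma sum_sq_ge0 x : 0 <= \sum_(i < d) x ord0 i ^+ 2.
Proof. by apply: sumr_ge0 => i _; rewrite sqr_ge0. Qed.

Lemma norm2_sq x : norm2 x ^+ 2 = \sum_(i < d) x ord0 i ^+ 2.
Proof. by rewrite /norm2 sqr_sqrtr // sum_sq_ge0. Qed.

Lemma coord_le_norm2 x i : `|x ord0 i| <= norm2 x.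
Proof.
rewrite -sqrtr_sqr /norm2; apply: ler_wsqrtr.
rewrite (bigD1 i) //= lerDl; apply: sumr_ge0 => j _; exact: sqr_ge0.
Qed.

Lemma CS x y : \sum_(i < d) x ord0 i * y ord0 i <= norm2 x * norm2 y.
Proof.
set A := norm2 x; set B := norm2 y.
have hA : 0 <= A := norm2_ge0 x. have hB : 0 <= B := norm2_ge0 y.
have key : 0 <= \sum_(i < d) (B * x ord0 i - A * y ord0 i) ^+ 2.
  by apply: sumr_ge0 => i _; rewrite sqr_ge0.
have e : \sum_(i < d) (B * x ord0 i - A * y ord0 i) ^+ 2 =
   B ^+ 2 * (\sum_(i < d) x ord0 i ^+ 2) - 2 * A * B * (\sum_(i < d) x ord0 i * y ord0 i)
   + A ^+ 2 * (\sum_(i < d) y ord0 i ^+ 2).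
  rewrite !mulr_sumr -sumrB -big_split /=; apply: eq_bigr => i _; ring.
rewrite e -!norm2_sq -/A -/B in key.
have [AB0|ABpos] := eqVneq (A * B) 0.
  move/eqP: AB0; rewrite mulf_eq0 => /orP [] /eqP h0.
  - have : \sum_(i < d) x ord0 i ^+ 2 = 0 by rewrite -norm2_sq -/A h0 expr0n.
    move/eqP; rewrite psumr_eq0; last by move=> i _; rewrite sqr_ge0.
    move/allP => hz; rewrite big1 ?h0 ?mul0r // => i _.
    have := hz i (mem_index_enum _); rewrite /= sqrf_eq0 => /eqP ->; by rewrite mul0r.
  - have : \sum_(i < d) y ord0 i ^+ 2 = 0 by rewrite -norm2_sq -/B h0 expr0n.
    move/eqP; rewrite psumr_eq0; last by move=> i _; rewrite sqr_ge0.
    move/allP => hz; rewrite big1 ?h0 ?mulr0 // => i _.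
    have := hz i (mem_index_enum _); rewrite /= sqrf_eq0 => /eqP ->; by rewrite mulr0.
have ABp : 0 < A * B by rewrite lt0r ABpos mulr_ge0.
set S := \sum_(i < d) _ in key *.
have : A * B * S <= A * B * (A * B) by nra.
by rewrite ler_pM2l.
Qed.

Lemma norm2_triangle x y : norm2 (x + y) <= norm2 x + norm2 y.
Proof.
have h1 := norm2_ge0 x; have h2 := norm2_ge0 y.
rewrite -(ger0_norm (addr_ge0 h1 h2)) -sqrtr_sqr /norm2; apply: ler_wsqrtr.
rewrite sqrrD !norm2_sq.
have e : \sum_(i < d) (x + y) ord0 i ^+ 2 = \sum_(i < d) x ord0 i ^+ 2
   + 2 * \sum_(i < d) x ord0 i * y ord0 i + \sum_(i < d) y ord0 i ^+ 2.
  rewrite mulr_sumr -!big_split /=; apply: eq_bigr => i _; rewrite !mxE; ring.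
rewrite e; have := CS x y; rewrite /norm2 => hc.
rewrite -mulr_natl; lra.
Qed.

Lemma norm2_scale (a : R) x : norm2 (a *: x) = `|a| * norm2 x.
Proof.
rewrite /norm2 -sqrtr_sqr -sqrtrM ?sqr_ge0 // mulr_sumr; congr Num.sqrt.
by apply: eq_bigr => i _; rewrite mxE exprMn.
Qed.

Lemma norm2_0 : norm2 (0 : 'rV[R]_d) = 0.
Proof. by rewrite /norm2 big1 ?sqrtr0 // => i _; rewrite mxE expr0n. Qed.

Lemma norm2_opp x : norm2 (- x) = norm2 x.
Proof. by rewrite -scaleN1r norm2_scale normrN normr1 mul1r. Qed.
End N.
Section C.
Variables (R : realType) (d B : nat) (blk : 'I_d -> 'I_B) (z : 'rV[R]_d).

Definition beats (j i : 'I_d) : bool :=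
  (`|z ord0 i| < `|z ord0 j|) || ((`|z ord0 j| == `|z ord0 i|) && (j < i)%N).

Lemma beats_irr i : ~~ beats i i.
Proof. by rewrite /beats ltxx ltnn andbF. Qed.

Lemma beats_trans i j k : beats k j -> beats j i -> beats k i.
Proof.
rewrite /beats => /orP [h1|/andP [/eqP e1 h1]] /orP [h2|/andP [/eqP e2 h2]].
- by rewrite (lt_trans h2 h1).
- by rewrite -e2 h1.
- by rewrite e1 h2.
- by rewrite e1 e2 eqxx (ltn_trans h1 h2) orbT.
Qed.

Lemma beats_total i j : i != j -> beats i j || beats j i.
Proof.
move=> nij; rewrite /beats.
have [h|h|h] := ltgtP `|z ord0 i| `|z ord0 j|; first by rewrite orbT.
  by [].
rewrite /=.
have : (val i != val j) by [].
by case: ltngtP.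
Qed.

Lemma rank_lt i j : blk j = blk i -> beats j i -> (blk_rank blk z j < blk_rank blk z i)%N.
Proof.
move=> bj bji; apply: proper_card; apply/properP; split.
  apply/fintype.subsetP => k; rewrite !inE => /andP [/eqP bk bkj].
  rewrite bk bj eqxx /=. exact: (beats_trans _ _ _ bkj bji).
exists j; first by rewrite inE bj eqxx /=.
by rewrite inE negb_and -/(beats j j) beats_irr orbT.
Qed.

Lemma rank_inj i j : blk j = blk i -> blk_rank blk z j = blk_rank blk z i -> j = i.
Proof.
move=> bj e; apply/eqP; apply/negPn/negP => nji.
have := beats_total _ _ nji; case/orP => h.
  by have := rank_lt _ _ bj h; rewrite e ltnn.
by have := rank_lt _ _ (esym bj) h; rewrite e ltnn.
Qed.

Lemma block_count (k : 'I_B) (c : int) : (0 <= c)%R ->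
  (#|[set i | (blk i == k) && ((blk_rank blk z i)%:Z < c)]|%:Z <= c)%R.
Proof.
move=> cpos.
have [n ->] : exists n : nat, c = n%:Z by exists `|c|%N; rewrite gez0_abs.
rewrite lez_nat cardE.
rewrite -(size_map (blk_rank blk z)) -[n in (_ <= n)%N](size_iota 0).
apply: uniq_leq_size.
  rewrite map_inj_in_uniq ?enum_uniq // => i j; rewrite !mem_enum !inE.
  move=> /andP [/eqP bi _] /andP [/eqP bj _] e; apply: rank_inj _ _ _ _; first by rewrite bi bj.
  by rewrite e.
move=> r /mapP [i]; rewrite mem_enum inE => /andP [_ h] ->.
by rewrite mem_iota /= add0n -ltz_nat.
Qed.


Lemma mask_sum (alpha : R) : 0 <= alpha ->
  \sum_(i < d) (FLT blk alpha z ord0 i) ^+ 2 <= d%:R * alpha + B%:R.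
Proof.
move=> a0.
have e1 : \sum_(i < d) (FLT blk alpha z ord0 i) ^+ 2 =
   \sum_(k < B) (#|[set i | (blk i == k) &&
       ((blk_rank blk z i)%:Z < Num.ceil ((blk_size blk k)%:R * alpha))]|%:R : R).
  rewrite (partition_big blk xpredT) //=. apply eq_bigr => k _.
  rewrite -sum1_card natr_sum [LHS]big_mkcond [RHS]big_mkcond /=; apply: eq_bigr => i _.
  rewrite inE mxE; case: eqP => [<-|] /=.
    by case: ifP => _; rewrite ?expr1n ?expr0n.
  by [].
have e2 : (d%:R : R) = \sum_(k < B) (blk_size blk k)%:R.
  rewrite -natr_sum; congr (_%:R).
  rewrite -[d in LHS]card_ord -sum1_card (partition_big blk xpredT) //=.
  by apply: eq_bigr => k _; rewrite /blk_size -sum1_card; apply: eq_bigl => i; rewrite inE.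
rewrite e1 e2 mulr_suml -[B in X in _ <= _ + X]card_ord -sum1_card natr_sum -big_split /=.
apply: ler_sum => k _.
set c := Num.ceil _.
have h1 : (#|[set i | (blk i == k) && ((blk_rank blk z i)%:Z < c)]|%:Z <= c)%R.
  apply: block_count; rewrite ceil_ge0; apply: (@lt_le_trans _ _ 0); first by [].
  by apply: mulr_ge0.
have h2 := ceilB1_lt ((blk_size blk k)%:R * alpha).
rewrite -/c in h2.
have : (#|[set i | (blk i == k) && ((blk_rank blk z i)%:Z < c)]|%:R : R) <= c%:~R.
  by rewrite pmulrn ler_int.
rewrite intrD in h2; lra.
Qed.
End C.
Lemma scalar_bound (R : realType) (m v a b c K mk : R) :
  0 <= v -> `|m| <= c * Num.sqrt v -> 0 < a -> 0 < b -> b <= 1 -> c <= K * a -> 0 <= K ->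
  (mk = 0 \/ mk = 1) ->
  `|(if b^-1 * v == 0 then 0 else a^-1 * m * mk / Num.sqrt (b^-1 * v))| <= K * mk.
Proof.
move=> v0 hm a0 b0 b1 cK K0 [->|->].
  by case: ifP => _; rewrite ?mulr0 ?mul0r normr0.
case: ifP => hv; first by rewrite normr0 mulr1.
have vpos : 0 < v.
  rewrite lt0r v0 andbT; apply/negP => /eqP v00; by rewrite v00 mulr0 eqxx in hv.
set w := Num.sqrt v.
have wpos : 0 < w by rewrite sqrtr_gt0.
have sb : 0 < Num.sqrt b by rewrite sqrtr_gt0.
have sb1 : Num.sqrt b <= 1 by rewrite -sqrtr1 ler_wsqrtr.
have e : Num.sqrt (b^-1 * v) = w / Num.sqrt b.
  by rewrite sqrtrM ?invr_ge0 ?ltW // sqrtrV ?ltW // mulrC.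
rewrite e.
have -> : a^-1 * m * 1 / (w / Num.sqrt b) = m * Num.sqrt b / (a * w).
  field; apply/and3P; split; apply/lt0r_neq0 => //.
rewrite normrM normfV (ger0_norm (mulr_ge0 (ltW a0) (ltW wpos))) normrM.
rewrite (ger0_norm (ltW sb)) ler_pdivrMr ?mulr_gt0 // mulr1.
have hm0 : 0 <= `|m| by [].
have h1 : `|m| * Num.sqrt b <= `|m| by rewrite ler_piMr.
have h2 : c * w <= K * a * w by rewrite ler_pM2r.
rewrite mulrA; apply: (le_trans h1); apply: (le_trans hm); exact h2.
Qed.

Section Dyn.
Variables (R : realType) (d B : nat) (grad : 'rV[R]_d -> 'rV[R]_d) (blk : 'I_d -> 'I_B)
  (alpha beta1 beta2 : R) (eta : nat -> R) (theta0 : 'rV[R]_d).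

Let st t := mofo_state grad blk alpha beta1 beta2 eta theta0 t.
Definition th t := (st t).1.1.
Definition mm t := (st t).1.2.
Definition vv t := (st t).2.
Definition UU t : 'rV[R]_d :=
  let m1 := mm t.+1 in let v1 := vv t.+1 in
  let mhat := (1 - beta1 ^+ t.+1)^-1 *: m1 in
  let vhat := (1 - beta2 ^+ t.+1)^-1 *: v1 in
  let mask := FLT blk alpha m1 in
  \row_(i < d) (if vhat ord0 i == 0 then 0
                else mhat ord0 i * mask ord0 i / Num.sqrt (vhat ord0 i)).

Lemma mm_succ t : mm t.+1 = beta1 *: mm t + (1 - beta1) *: grad (th t).
Proof. by rewrite /mm /th /st /=; case: (mofo_state _ _ _ _ _ _ _ t) => [[a b] c]. Qed.

Lemma vv_succ t : vv t.+1 = beta2 *: vv t + (1 - beta2) *: \row_(i < d) (grad (th t) ord0 i ^+ 2).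
Proof. by rewrite /vv /th /st /=; case: (mofo_state _ _ _ _ _ _ _ t) => [[a b] c]. Qed.

Lemma th_succ t : th t.+1 = th t - eta t.+1 *: UU t.
Proof.
rewrite /UU mm_succ vv_succ /mm /vv /th /st /=.
by case: (mofo_state _ _ _ _ _ _ _ t) => [[a b] c].
Qed.

Lemma th_theta t : mofo_theta grad blk alpha beta1 beta2 eta theta0 t = th t.
Proof. by []. Qed.

Hypotheses (b1pos : 0 < beta1) (b2pos : 0 < beta2)
  (b12 : beta1 < Num.sqrt beta2) (b21 : Num.sqrt beta2 < 1) (apos : 0 <= alpha).

Let s2 := Num.sqrt beta2.
Let s1 := Num.sqrt (1 - beta2).
Let gam := beta1 / s2.
Let cc := (1 - beta1) / (s1 * (1 - gam)).
Let KK := 1 / (s1 * (1 - gam)).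

Lemma b2lt1 : beta2 < 1.
Proof. by have h := b21; rewrite -sqrtr1 ltr_sqrt in h. Qed.

Lemma s2pos : 0 < s2. Proof. by rewrite sqrtr_gt0. Qed.
Lemma s1pos : 0 < s1. Proof. by rewrite sqrtr_gt0 subr_gt0 b2lt1. Qed.
Lemma gam01 : 0 <= gam /\ gam < 1.
Proof.
have h := s2pos; split; first by rewrite divr_ge0 // ltW.
by rewrite ltr_pdivrMr // mul1r.
Qed.
Lemma b1lt1 : beta1 < 1. Proof. exact: lt_trans b12 b21. Qed.
Lemma den_pos : 0 < s1 * (1 - gam).
Proof. by rewrite mulr_gt0 ?s1pos // subr_gt0; case: gam01. Qed.

Lemma vv_ge0 t i : 0 <= vv t ord0 i.
Proof.
elim: t => [|t IH]; first by rewrite /vv /= mxE.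
rewrite vv_succ !mxE; apply: addr_ge0; apply: mulr_ge0 => //; try exact: ltW.
  by rewrite subr_ge0 ltW // b2lt1.
exact: sqr_ge0.
Qed.

Lemma mm_bound t i : `|mm t ord0 i| <= cc * Num.sqrt (vv t ord0 i).
Proof.
have [g0 g1] := gam01; have hs2 := s2pos; have hs1 := s1pos; have hd := den_pos.
have cc0 : 0 <= cc by rewrite divr_ge0 ?subr_ge0 ?ltW ?b1lt1.
elim: t => [|t IH]; first by rewrite /mm /= mxE normr0 mulr_ge0 ?sqrtr_ge0.
rewrite mm_succ vv_succ !mxE.
set m := mm t ord0 i; set v := vv t ord0 i; set g := grad (th t) ord0 i.
have v0 : 0 <= v := vv_ge0 t i.
set X := s2 * Num.sqrt v; set Y := s1 * `|g|.
have X0 : 0 <= X by rewrite mulr_ge0 ?sqrtr_ge0 ?(ltW hs2).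
have Y0 : 0 <= Y by rewrite mulr_ge0 ?(ltW hs1).
have eXY : beta2 * v + (1 - beta2) * g ^+ 2 = X ^+ 2 + Y ^+ 2.
  rewrite /X /Y !exprMn /s2 /s1 !sqr_sqrtr ?sqr_sqrtr ?real_normK ?num_real //.
    by rewrite subr_ge0 ltW // b2lt1.
  exact: ltW.
have hge : gam * X + (1 - gam) * Y <= Num.sqrt (beta2 * v + (1 - beta2) * g ^+ 2).
  rewrite eXY -[X in X <= _]ger0_norm; last first.
    by apply: addr_ge0; apply: mulr_ge0 => //; rewrite subr_ge0 ltW.
  rewrite -sqrtr_sqr; apply: ler_wsqrtr.
  have h1 : 0 <= 1 - gam by rewrite subr_ge0 ltW.
  rewrite -subr_ge0.
  have -> : X ^+ 2 + Y ^+ 2 - (gam * X + (1 - gam) * Y) ^+ 2 =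
    gam * (1 - gam) * (X - Y) ^+ 2 + (1 - gam) * X ^+ 2 + gam * Y ^+ 2 by ring.
  exact: (addr_ge0 (addr_ge0 (mulr_ge0 (mulr_ge0 g0 h1) (sqr_ge0 _)) (mulr_ge0 h1 (sqr_ge0 _)))
            (mulr_ge0 g0 (sqr_ge0 _))).
have e1 : cc * (gam * X) = beta1 * (cc * Num.sqrt v).
  rewrite /cc /gam /X; field.
  by apply/and3P; split; apply/lt0r_neq0 => //; rewrite subr_gt0.
have e2 : cc * ((1 - gam) * Y) = (1 - beta1) * `|g|.
  rewrite /cc /Y; field.
  by apply/andP; split; apply/lt0r_neq0 => //; rewrite subr_gt0.
have h1b : 0 <= 1 - beta1 by rewrite subr_ge0 ltW // b1lt1.
apply: (le_trans (ler_normD _ _)); rewrite !normrM (ger0_norm (ltW b1pos)) (ger0_norm h1b).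
apply: (le_trans _ (ler_wpM2l cc0 hge)).
rewrite mulrDr e1 e2; apply: lerD => //.
by rewrite ler_wpM2l // ltW.
Qed.


Lemma mask01 (z : 'rV[R]_d) i : FLT blk alpha z ord0 i = 0 \/ FLT blk alpha z ord0 i = 1.
Proof. by rewrite mxE; case: ifP; [right|left]. Qed.

Lemma UU_bound t i : `|UU t ord0 i| <= KK * FLT blk alpha (mm t.+1) ord0 i.
Proof.
rewrite /UU mxE !mxE.
have hb1 : beta1 < 1 := b1lt1. have hb2 : beta2 < 1 := b2lt1.
have hd := den_pos.
apply: scalar_bound.
- exact: vv_ge0.
- exact: mm_bound.
- by rewrite subr_gt0 exprn_ilt1 // ltW.
- by rewrite subr_gt0 exprn_ilt1 // ltW.
- by rewrite lerBlDr lerDl exprn_ge0 // ltW.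
- rewrite /cc /KK mul1r mulrC ler_wpM2r //; first by rewrite invr_ge0 ltW.
  rewrite lerB // exprSr ler_piMl //; first exact: ltW.
  by rewrite exprn_ile1 ?ltW.
- by rewrite /KK mul1r invr_ge0 ltW.
- by case: ifP; [right|left].
Qed.

Lemma norm2_UU t : norm2 (UU t) <= Num.sqrt (d%:R * alpha + B%:R) * KK.
Proof.
have K0 : 0 <= KK by rewrite /KK mul1r invr_ge0 ltW // den_pos.
rewrite mulrC -(ger0_norm K0) -sqrtr_sqr -sqrtrM ?sqr_ge0 //; apply: ler_wsqrtr.
apply: (le_trans _ (ler_wpM2l (sqr_ge0 KK) (@mask_sum R d B blk (mm t.+1) alpha apos))).
rewrite mulr_sumr; apply: ler_sum => i _.
have h := UU_bound t i.
have hm : 0 <= FLT blk alpha (mm t.+1) ord0 i by case: (mask01 (mm t.+1) i) => ->.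
rewrite -exprMn -real_normK ?num_real //.
by rewrite ler_pXn2r ?nnegrE // mulr_ge0.
Qed.

Lemma th_diff (s t : nat) : (forall k, 0 <= eta k) -> (s <= t)%N ->
  norm2 (th t - th s) <= \sum_(s <= k < t) eta k.+1 * (Num.sqrt (d%:R * alpha + B%:R) * KK).
Proof.
move=> eta0; elim: t => [|t IH].
  by rewrite leqn0 => /eqP ->; rewrite subrr norm2_0 big_geq.
rewrite leq_eqVlt => /orP [/eqP <-|hst]; first by rewrite subrr norm2_0 big_geq.
rewrite big_nat_recr //= th_succ.
have -> : th t - eta t.+1 *: UU t - th s = (th t - th s) + (- eta t.+1) *: UU t.
  by rewrite scaleNr addrAC.
apply: (le_trans (norm2_triangle _ _ _ _)); apply: lerD; first exact: IH.
rewrite norm2_scale normrN ger0_norm //; apply: ler_wpM2l => //; exact: norm2_UU.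
Qed.

End Dyn.

Lemma sum_isqrt (R : realType) (s t : nat) : (s <= t)%N ->
  \sum_(s <= k < t) (Num.sqrt (k.+1%:R : R))^-1 <=
  2 * Num.sqrt 2 * (Num.sqrt t.+1%:R - Num.sqrt s.+1%:R).
Proof.
have r2 : Num.sqrt (2 : R) ^+ 2 = 2 by rewrite sqr_sqrtr.
have r0 : 0 < Num.sqrt (2 : R) by rewrite sqrtr_gt0.
elim: t => [|t IH].
  by rewrite leqn0 => /eqP ->; rewrite big_geq // subrr mulr0.
rewrite leq_eqVlt => /orP [/eqP <-|hst]; first by rewrite big_geq // subrr mulr0.
rewrite big_nat_recr //=.
have := IH hst => {}IH.
set a := Num.sqrt (t.+1%:R : R); set b := Num.sqrt (t.+2%:R : R).
have a1 : 1 <= a.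
  by rewrite /a -[X in X <= _]sqrtr1; apply: ler_wsqrtr; rewrite ler1n.
have a2 : a ^+ 2 = t.+1%:R by rewrite sqr_sqrtr.
have b2 : b ^+ 2 = t.+2%:R by rewrite sqr_sqrtr.
have b0 : 0 <= b by apply: sqrtr_ge0.
have eb : b ^+ 2 = a ^+ 2 + 1 by rewrite a2 b2 -natr1.
have hb : b <= Num.sqrt 2 * a.
  rewrite -(ger0_norm b0) -(ger0_norm (mulr_ge0 (ltW r0) (le_trans ler01 a1))).
  rewrite -!sqrtr_sqr; apply: ler_wsqrtr; rewrite exprMn r2 eb; nra.
have hba : a <= b by rewrite -(ger0_norm b0) -(ger0_norm (le_trans ler01 a1)) -!sqrtr_sqr;
  apply: ler_wsqrtr; rewrite eb lerDl.
have step : a^-1 <= 2 * Num.sqrt 2 * (b - a).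
  have apos : 0 < a by apply: lt_le_trans a1.
  rewrite -(mulr1 (a^-1)) ler_pdivrMl // .
  have : (b - a) * (b + a) = 1 by rewrite -subr_sqr eb; ring.
  nra.
rewrite -/a in IH; lra.
Qed.

Lemma norm2_d0 (R : realType) (d : nat) (x : 'rV[R]_d) : d = 0%N -> norm2 x = 0.
Proof. by move=> d0; move: x; rewrite d0 => x; rewrite /norm2 big_ord0 sqrtr0. Qed.

Theorem lemma3 (R : realType) (d B : nat) (blk : 'I_d -> 'I_B)
  (alpha beta1 beta2 eta Lc : R)
  (f : 'rV[R]_d -> R) (grad : 'rV[R]_d -> 'rV[R]_d) (theta0 : 'rV[R]_d) :
  (forall k : 'I_B, exists i : 'I_d, blk i = k) ->
  0 < alpha <= 1 ->
  0 < beta1 -> 0 < beta2 -> beta1 < Num.sqrt beta2 -> Num.sqrt beta2 < 1 ->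
  0 < eta ->
  is_gradient f grad ->
  (forall x y, norm2 (grad x - grad y) <= Lc * norm2 (x - y)) ->
  let C := Num.sqrt (d%:R * alpha + B%:R) /
             (Num.sqrt (1 - beta2) * (1 - beta1 / Num.sqrt beta2)) in
  let g := mofo_grad grad blk alpha beta1 beta2
             (fun t => eta / Num.sqrt t%:R) theta0 in
  forall (t s : nat) (i : 'I_d), (1 <= s)%N -> (s <= t)%N ->
    `|g t ord0 i - g s ord0 i| <= norm2 (g t - g s) /\
    norm2 (g t - g s) <= 2 * Num.sqrt 2 * Lc * C * eta * (t - s)%:R / Num.sqrt t%:R.
Proof.
move=> hblk /andP[a0 a1] b1p b2p b12 b21 e0 _ hL C g t s i hs hst.
split.
  by have := coord_le_norm2 _ _ (g t - g s) i; rewrite !mxE.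
have [d0|dpos] := posnP d.
  have B0 : B = 0%N.
    move: hblk d0; clear; case: B blk => // B' blk hblk d0.
    have [j _] := hblk ord0; have : (0 < d)%N by apply: leq_ltn_trans (leq0n _) (ltn_ord j). by rewrite d0.
  rewrite norm2_d0 // /C d0 B0 mul0r addr0 sqrtr0 mul0r !mulr0 !mul0r.
  by [].
have Lc0 : 0 <= Lc.
  have h := hL (const_mx 1) 0.
  have hpos : 0 < norm2 (const_mx 1 - 0 : 'rV[R]_d).
    rewrite /norm2 sqrtr_gt0 (bigD1 (Ordinal dpos)) //= !mxE subr0 expr1n.
    by rewrite ltr_pwDl // sumr_ge0 // => j _; rewrite sqr_ge0.
  by rewrite -(pmulr_lge0 _ hpos) (le_trans (norm2_ge0 _ _ _) h).
case: t hst => [|t'] //; case: s hs => [|s'] // _; rewrite ltnS => hst.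
set etaf := (fun t => eta / Num.sqrt t%:R).
have etaf0 : forall k, 0 <= etaf k.
  by move=> k; rewrite /etaf divr_ge0 ?sqrtr_ge0 // ltW.
have hth := @th_diff R d B grad blk alpha beta1 beta2 etaf theta0 b1p b2p b12 b21 (ltW a0) _ _ etaf0 hst.
have eg : forall n, g n.+1 = grad (@th R d B grad blk alpha beta1 beta2 etaf theta0 n) by [].
rewrite !eg.
apply: (le_trans (hL _ _)).
set K := Num.sqrt (d%:R * alpha + B%:R) * _ in hth.
have eK : K = C by rewrite /K /C mul1r.
rewrite eK in hth.
have C0 : 0 <= C.
  rewrite /C divr_ge0 ?sqrtr_ge0 // mulr_ge0 ?sqrtr_ge0 // subr_ge0 ltW //.
  by rewrite ltr_pdivrMr ?mul1r // sqrtr_gt0.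
apply: (le_trans (ler_wpM2l Lc0 hth)).
have es : \sum_(s' <= k < t') etaf k.+1 * C =
          eta * C * \sum_(s' <= k < t') (Num.sqrt (k.+1%:R : R))^-1.
  rewrite mulr_sumr; apply: eq_bigr => k _; rewrite /etaf; ring.
rewrite es.
have hS := sum_isqrt R _ _ hst.
have eC0 : 0 <= Lc * (eta * C) by rewrite mulr_ge0 // mulr_ge0 // ltW.
rewrite mulrA; apply: (le_trans (ler_wpM2l eC0 hS)).
set a := Num.sqrt (t'.+1%:R : R); set b := Num.sqrt (s'.+1%:R : R).
have apos : 0 < a by rewrite sqrtr_gt0.
have b0 : 0 <= b by apply: sqrtr_ge0.
have hba : b <= a by apply: ler_wsqrtr; rewrite ler_nat.
have ea : a ^+ 2 = t'.+1%:R by rewrite sqr_sqrtr.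
have eb : b ^+ 2 = s'.+1%:R by rewrite sqr_sqrtr.
rewrite natrB; last by [].
rewrite -ea -eb.
have key : a - b <= (a ^+ 2 - b ^+ 2) / a.
  rewrite ler_pdivlMr //; nra.
have r0 : 0 <= 2 * Num.sqrt (2 : R) by rewrite mulr_ge0 ?sqrtr_ge0.
have := ler_wpM2l (mulr_ge0 eC0 r0) key.
move=> h.
rewrite [X in X <= _](_ : _ = Lc * (eta * C) * (2 * Num.sqrt 2) * (a - b)); last by ring.
apply: (le_trans h); rewrite le_eqVlt; apply/orP; left; apply/eqP; ring.
Qed.
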